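(* Let $n,x$ be integers with $1<x<n$, so that $G=C_{2n}(x,1,n)$ is a $5$-regular circulant graph. If $n\equiv 2 \pmod 3$, $x\equiv 1\pmod 3$ and $x<\tfrac{n}{2}$, then $G$ is word-representable.
   Context: Two distinct letters $x,y$ alternate in a word $w$ if, after deleting all other letters from $w$, the resulting word is of the form $xyxy\cdots$ or $yxyx\cdots$ (of even or odd length). A graph $G=(V,E)$ is word-representable if there is a word $w$ over the alphabet $V$, containing every letter of $V$ at least once, such that for all distinct $x,y\in V$, $xy\in E$ if and only if $x$ and $y$ alternate in $w$. For an integer $m$ and a set $R$ of positive integers each at most $m/2$, the circulant graph $C_m(R)$ has vertex set $\{0,1,\dots,m-1\}$, with $i$ and $j$ adjacent iff $\min(|i-j|,\,m-|i-j|)\in R$. $C_{2n}(x,1,n)$ denotes the circulant graph on $2n$ vertices with jump set $\{1,x,n\}$; it is $5$-regular exactly when $1<x<n$. *)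

(* Defs.v *)
From mathcomp Require Import all_boot.
Set Implicit Arguments. Unset Strict Implicit. Unset Printing Implicit Defensive.

Definition alt_word (T : Type) (a b : T) (k : nat) : seq T :=
  mkseq (fun i => if odd i then b else a) k.

Definition alternate (T : eqType) (a b : T) (w : seq T) : Prop :=
  let u := [seq c <- w | (c == a) || (c == b)] in
  exists k, u = alt_word a b k \/ u = alt_word b a k.

Definition word_representable (T : finType) (E : rel T) : Prop :=
  exists w : seq T, (forall v : T, v \in w) /\
    (forall a b : T, a != b -> (E a b <-> alternate a b w)).

(* Circulant graph C_m(R) on vertices 0..m-1: i ~ j iff min(|i-j|, m-|i-j|) \in R. *)
Definition circ_adj (m : nat) (R : pred nat) : rel 'I_m :=
  fun i j => let d := ((i - j) + (j - i))%N in R (minn d (m - d)).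

Definition jumps_1xn (x n : nat) : pred nat :=
  fun d => [|| d == 1, d == x | d == n].
Arguments circ_adj m R : clear implicits.

(* Main.v *)
Require Import Defs.
From mathcomp Require Import all_boot zify.
Set Implicit Arguments. Unset Strict Implicit. Unset Printing Implicit Defensive.

Definition prb (T : eqType) (a b : T) : pred T := fun c => (c == a) || (c == b).

Definition adjdup (T : Type) (s : seq T) : Prop :=
  exists s1 s2 c, s = s1 ++ c :: c :: s2.

Lemma alt_word4 (T : Type) (a b : T) k :
  alt_word a b (4 + k) = [:: a; b; a; b] ++ alt_word a b k.
Proof.
rewrite /alt_word /mkseq iotaD map_cat /=; congr (_ :: _ :: _ :: _ :: _).
rewrite add0n (iotaDl 4 0) -map_comp; apply: eq_map => i /=.
by rewrite add0n !negbK.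

Qed.

Lemma alt_word_nodup (T : eqType) (a b : T) k : a != b -> ~ adjdup (alt_word a b k).
Proof.
move=> nab [s1 [s2 [c E]]].
have Hs : size (alt_word a b k) = k by rewrite size_mkseq.
have H1 : size s1 < k by rewrite -Hs E size_cat /= addnS ltnS leq_addr.
have H2 : (size s1).+1 < k by rewrite -Hs E size_cat /= !addnS !ltnS leq_addr.
have e1 : nth a (alt_word a b k) (size s1) = c by rewrite E nth_cat ltnn subnn.
have e2 : nth a (alt_word a b k) (size s1).+1 = c.
  by rewrite E nth_cat ltnNge leqnSn /= subSn // subnn.
move: e1 e2; rewrite /alt_word !nth_mkseq // /= => e1 e2.
move: e2; rewrite -e1; case: (odd (size s1)) => /= h.
  by move: nab; rewrite h eqxx.
by move: nab; rewrite h eqxx.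
Qed.

Lemma adjdup_flatten (T : eqType) (ss : seq (seq T)) s :
  s \in ss -> adjdup s -> adjdup (flatten ss).
Proof.
case/splitPr=> ss1 ss2 [s1 [s2 [c ->]]].
exists (flatten ss1 ++ s1), (s2 ++ flatten ss2), c.
by rewrite flatten_cat /= -!catA.
Qed.

Lemma flatten_const (T : Type) (a b : T) (ss : seq (seq T)) :
  flatten [seq [:: a; b; a; b] | _ <- ss] = alt_word a b (4 * size ss).
Proof.
elim: ss => [|s ss IH] /=; first by [].
by rewrite mulnS alt_word4 IH.
Qed.

Definition Ls (T : finType) (col : T -> nat) (s : seq T) (k : nat) (R : pred T) :=
  [seq z <- s | (col z == k) && R z].

Lemma contrib (T : finType) (col : T -> nat) (s : seq T) k (R : pred T) x y :
  uniq s -> x \in s -> y \in s -> col x != col y ->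
  [seq z <- Ls col s k R | prb x y z] =
  (if (col x == k) && R x then [:: x] else [::]) ++
  (if (col y == k) && R y then [:: y] else [::]).
Proof.
move=> us xs ys cxy; rewrite /Ls -filter_predI.
have nxy : x != y by apply: contraNneq cxy => ->.
case Qx: ((col x == k) && R x); case Qy: ((col y == k) && R y) => /=.
- by move: Qx Qy cxy => /andP[/eqP -> _] /andP[/eqP -> _]; rewrite eqxx.
- rewrite (@eq_filter _ _ (pred1 x)) ?filter_pred1_uniq // => z /=.
  rewrite /prb; case: (z =P x) => [->|_] /=; first by rewrite Qx.
  by case: (z =P y) => [->|_]; rewrite ?Qy ?andbF.
- rewrite (@eq_filter _ _ (pred1 y)) ?filter_pred1_uniq // => z /=.
  rewrite /prb; case: (z =P y) => [->|_] /=; first by rewrite orbT Qy.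
  by case: (z =P x) => [->|_]; rewrite ?Qx ?andbF // (negbTE nxy).
- rewrite (@eq_filter _ _ pred0) ?filter_pred0 // => z /=.
  rewrite /prb; case: (z =P y) => [->|_] /=; first by rewrite Qy andbF.
  by case: (z =P x) => [->|_]; rewrite ?Qx ?andbF.
Qed.

Lemma contribE (T : finType) (col : T -> nat) k (R : pred T) x y :
  col x != col y ->
  [seq z <- Ls col (enum T) k R | prb x y z] =
  (if (col x == k) && R x then [:: x] else [::]) ++
  (if (col y == k) && R y then [:: y] else [::]).
Proof. by move=> h; rewrite contrib ?enum_uniq ?mem_enum. Qed.

Lemma contribR (T : finType) (col : T -> nat) k (R : pred T) x y :
  col x != col y ->
  [seq z <- Ls col (rev (enum T)) k R | prb x y z] =
  (if (col x == k) && R x then [:: x] else [::]) ++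
  (if (col y == k) && R y then [:: y] else [::]).
Proof. by move=> h; rewrite contrib ?rev_uniq ?enum_uniq ?mem_rev ?mem_enum. Qed.

Ltac splitE E := repeat (match goal with |- context [E ?a ?b] => case: (E a b) end).

Definition Le (T : finType) (col : T -> nat) k (R : pred T) := Ls col (enum T) k R.
Definition Lr (T : finType) (col : T -> nat) k := Ls col (rev (enum T)) k predT.

Definition prevp (T : finType) (col : T -> nat) :=
  Le col 0 predT ++ Le col 1 predT ++ Le col 2 predT ++ Lr col 0 ++ Lr col 1 ++ Lr col 2.

Definition pa (T : finType) (E : rel T) (col : T -> nat) (u : T) :=
  Le col 0 predT ++ Le col 1 predT ++ Le col 2 predT ++ Le col 0 (fun z => z != u) ++
  Le col 1 (fun z => ~~ E u z) ++ [:: u] ++ Le col 1 (E u) ++ Le col 2 predT.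

Definition pc (T : finType) (E : rel T) (col : T -> nat) (u : T) :=
  Le col 0 predT ++ Le col 1 predT ++ Le col 2 (E u) ++ [:: u] ++
  Le col 2 (fun z => ~~ E u z) ++ Le col 0 (fun z => z != u) ++ Le col 1 predT ++ Le col 2 predT.

Definition pb (T : finType) (E : rel T) (col : T -> nat) (v : T) :=
  Le col 0 predT ++ Le col 1 (E v) ++ [:: v] ++ Le col 1 (fun z => ~~ E v z) ++
  Le col 2 (fun z => z != v) ++ Le col 0 predT ++ Le col 1 predT ++ Le col 2 predT.

Definition pieces (T : finType) (E : rel T) (col : T -> nat) :=
  prevp col :: [seq pa E col u | u <- enum T & col u == 0] ++
  [seq pc E col u | u <- enum T & col u == 0] ++
  [seq pb E col u | u <- enum T & col u == 2].

Lemma edge_piece (T : finType) (E : rel T) (col : T -> nat) x y p :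
  (forall a b, E a b = E b a) -> E x y -> col x < col y -> col y < 3 ->
  p \in pieces E col -> [seq z <- p | prb x y z] = [:: x; y; x; y].
Proof.
move=> Es Exy lxy ly3.
have Eyx : E y x by rewrite Es.
have cxy : col x != col y by rewrite neq_ltn lxy.
have [[cx cy]|[[cx cy]|[cx cy]]] :
  (col x = 0 /\ col y = 1) \/ (col x = 0 /\ col y = 2) \/ (col x = 1 /\ col y = 2) by lia.
all: rewrite /pieces inE => /orP[/eqP ->|]; [
  by rewrite /prevp /Le /Lr !filter_cat !(contribE, contribR) // cx cy |].
all: rewrite !mem_cat => /orP[|/orP[]] /mapP[u]; rewrite mem_filter => /andP[/eqP cu _] ->.
all: rewrite /pa /pc /pb /Le !filter_cat !contribE //= cx cy /=.
all: rewrite /prb.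
all: case: (x =P u) => [?|/eqP nxu]; case: (y =P u) => [?|/eqP nyu]; subst; try (exfalso; lia).
all: rewrite ?eqxx ?Exy ?Eyx /=.
all: repeat match goal with H : is_true (?a != ?b) |- _ =>
       try rewrite (negbTE H); try rewrite (eq_sym b a) (negbTE H); try rewrite H; clear H end.
all: rewrite /=.
all: splitE E.
all: by [].
Qed.

Lemma zeroL (T : finType) (col : T -> nat) (s : seq T) k (R : pred T) a b :
  col a != k -> col b != k -> [seq z <- Ls col s k R | prb a b z] = [::].
Proof.
move=> ha hb; rewrite /Ls -filter_predI (@eq_filter _ _ pred0) ?filter_pred0 // => z /=.
rewrite /prb; case: (z =P a) => [->|_]; first by rewrite (negbTE ha).
by case: (z =P b) => [->|_]; rewrite ?(negbTE hb).
Qed.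

Lemma sameL (T : finType) (col : T -> nat) (s : seq T) k a b :
  col a = k -> col b = k -> [seq z <- Ls col s k predT | prb a b z] = [seq z <- s | prb a b z].
Proof.
move=> ha hb; rewrite /Ls -filter_predI; apply: eq_filter => z /=.
rewrite /prb andbT; case: (z =P a) => [->|_]; first by rewrite ha eqxx.
by case: (z =P b) => [->|_]; rewrite ?hb ?eqxx.
Qed.

Lemma pair_filter (T : finType) (a b : T) : a != b ->
  exists p q, [seq z <- enum T | prb a b z] = [:: p; q].
Proof.
move=> nab.
have hc : count (prb a b) (enum T) = 2.
  have := count_predUI (pred1 a) (pred1 b) (enum T).
  rewrite (@eq_count _ (predI (pred1 a) (pred1 b)) pred0); last first.
    by move=> z /=; case: (z =P a) => [->|_] //; rewrite (negbTE nab).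
  have ha : count (pred1 a) (enum T) = 1 by rewrite count_uniq_mem ?enum_uniq // mem_enum.
  have hb : count (pred1 b) (enum T) = 1 by rewrite count_uniq_mem ?enum_uniq // mem_enum.
  rewrite count_pred0 addn0 ha hb => h.
  by rewrite (@eq_count _ _ (predU (pred1 a) (pred1 b))) // h.
move: hc; rewrite -size_filter.
case: [seq z <- enum T | prb a b z] => [|p [|q [|r l]]] //= _.
by exists p, q.
Qed.

Lemma nonedge (T : finType) (E : rel T) (col : T -> nat) a b :
  (forall a b, E a b = E b a) -> (forall a, col a < 3) -> a != b -> ~~ E a b ->
  adjdup [seq z <- flatten (pieces E col) | prb a b z].
Proof.
move=> Es c3.
wlog: a b / col a <= col b.
  move=> W nab nE; case: (leqP (col a) (col b)) => h; first by apply: W.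
  rewrite (@eq_filter _ _ (prb b a)); last by move=> z; rewrite /prb orbC.
  by apply: W; [exact: ltnW | rewrite eq_sym | rewrite Es].
move=> lab nab nE.
have nba : b != a by rewrite eq_sym.
have nE' : ~~ E b a by rewrite Es.
rewrite filter_flatten.
case: (ltngtP (col a) (col b)) lab => // [lt|ecol] _.
- have [[ca cb]|[[ca cb]|[ca cb]]] :
    (col a = 0 /\ col b = 1) \/ (col a = 0 /\ col b = 2) \/ (col a = 1 /\ col b = 2).
    by have := c3 b; lia.
  + apply: (@adjdup_flatten _ _ [seq z <- pa E col a | prb a b z]).
      apply: map_f; have H : a \in [seq u <- enum T | col u == 0] by rewrite mem_filter ca eqxx mem_enum.
      by rewrite /pieces inE ?mem_cat (map_f (pa E col) H) ?orbT.
    rewrite /pa /Le !filter_cat !contribE ?ca ?cb //= /prb eqxx ?(negbTE nE) ?(negbTE nba) /=.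
    by exists [:: a], [:: a], b.
  + apply: (@adjdup_flatten _ _ [seq z <- pc E col a | prb a b z]).
      apply: map_f; have H : a \in [seq u <- enum T | col u == 0] by rewrite mem_filter ca eqxx mem_enum.
      by rewrite /pieces inE ?mem_cat (map_f (pc E col) H) ?orbT.
    rewrite /pc /Le !filter_cat !contribE ?ca ?cb //= /prb eqxx ?(negbTE nE) ?(negbTE nba) /=.
    by exists [::], [:: b; b], a.
  + apply: (@adjdup_flatten _ _ [seq z <- pb E col b | prb a b z]).
      apply: map_f; have H : b \in [seq u <- enum T | col u == 2] by rewrite mem_filter cb eqxx mem_enum.
      by rewrite /pieces inE ?mem_cat (map_f (pb E col) H) ?orbT.
    rewrite /pb /Le !filter_cat !contribE ?ca ?cb //= /prb eqxx ?(negbTE nE') ?(negbTE nba) /=.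
    by exists [:: b], [:: b], a.
- have Hm : [seq z <- prevp col | prb a b z] \in [seq [seq z <- i | prb a b z] | i <- pieces E col].
    by apply: map_f; rewrite /pieces inE eqxx.
  apply: (adjdup_flatten Hm).
  have [p [q pq]] := pair_filter nab.
  have rpq : [seq z <- rev (enum T) | prb a b z] = [:: q; p] by rewrite filter_rev pq.
  have : col a = 0 \/ col a = 1 \/ col a = 2 by have := c3 a; lia.
  rewrite /prevp /Le /Lr !filter_cat.
  have cb : col b = col a by [].
  case=> [ca|[ca|ca]]; rewrite ca in cb.
  + rewrite !(@sameL _ col _ 0 a b) // !(@zeroL _ col _ _ _ a b) ?ca ?cb // pq rpq /=.
    by exists [:: p], [:: p], q.
  + rewrite !(@sameL _ col _ 1 a b) // !(@zeroL _ col _ _ _ a b) ?ca ?cb // pq rpq /=.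
    by exists [:: p], [:: p], q.
  + rewrite !(@sameL _ col _ 2 a b) // !(@zeroL _ col _ _ _ a b) ?ca ?cb // pq rpq /=.
    by exists [:: p], [:: p], q.
Qed.

Lemma wr_of_3col (T : finType) (E : rel T) (col : T -> nat) :
  (forall a b, E a b = E b a) -> (forall a b, E a b -> col a != col b) ->
  (forall a, col a < 3) -> word_representable E.
Proof.
move=> Es Ep c3; exists (flatten (pieces E col)); split.
  move=> v; apply/flattenP; exists (prevp col); first by rewrite /pieces inE eqxx.
  rewrite /prevp /Le /Lr /Ls !mem_cat !mem_filter ?mem_rev ?mem_enum /= ?andbT.
  have h := c3 v.
  have : [|| col v == 0, col v == 1 | col v == 2] by lia.
  by case/or3P=> ->; rewrite ?orbT.
move=> a b nab; split.
- move=> Eab.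
  have Eba : E b a by rewrite Es.
  rewrite /alternate.
  case: (ltngtP (col a) (col b)) => [lt|gt|ecol]; last by move: (Ep _ _ Eab); rewrite ecol eqxx.
  + exists (4 * size (pieces E col)); left.
    rewrite (_ : [seq c <- _ | (c == a) || (c == b)] = [seq c <- flatten (pieces E col) | prb a b c]) //.
    rewrite filter_flatten -(flatten_const a b (pieces E col)); congr flatten.
    by apply/eq_in_map => p hp; exact: (edge_piece Es Eab lt (c3 b) hp).
  + exists (4 * size (pieces E col)); right.
    rewrite (@eq_filter _ _ (prb b a)); last by move=> z; rewrite /prb orbC.
    rewrite filter_flatten -(flatten_const b a (pieces E col)); congr flatten.
    by apply/eq_in_map => p hp; exact: (edge_piece Es Eba gt (c3 a) hp).
- move=> [k hk]; apply/negPn/negP => nE.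
  have := nonedge Es c3 nab nE.
  rewrite (_ : [seq z <- _ | prb a b z] = [seq c <- flatten (pieces E col) | (c == a) || (c == b)]) //.
  case: hk => ->; apply: alt_word_nodup => //; by rewrite eq_sym.
Qed.

Lemma circ_color (n x : nat) :
  1 < x -> x < n -> n %% 3 = 2 -> x %% 3 = 1 -> 2 * x < n ->
  exists f : nat -> nat,
    (forall a, f (a + 2 * n) %% 3 = f a %% 3) /\
    (forall a L, [|| L == 1, L == x | L == n] -> f (a + L) %% 3 != f a %% 3).
Proof.
move=> x1 xn n3 x3 x2n.
set t := (n - 2 * x) %/ 3.
have nt : n = 2 * x + 3 * t by rewrite /t; lia.
have t1 : 0 < t by lia.
set J := (x + 12 * t) %/ (18 * t).
have hJ1 : J * (18 * t) <= x + 12 * t by apply: leq_trunc_div.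
have hJ2 : x + 12 * t < J.+1 * (18 * t) by apply: ltn_ceil; lia.
have hx1 : 18 * t * J <= 5 * x.
  case: (posnP J) => [->|Jp]; first by lia.
  have : t <= t * J by rewrite leq_pmulr.
  nia.
have hx2 : x <= 18 * t * J + 6 * t by nia.
set m := 2 * n.
have mp : 0 < m by lia.
set K := 12 * J + 5.
have KxL : 3 * J * m <= K * x by rewrite /m /K nt; nia.
have KxU : K * x <= (3 * J + 1) * m by rewrite /m /K nt; nia.
have Km : K < m.
  rewrite /K /m nt.
  case: (posnP J) => [->|Jp]; first by lia.
  have : t <= t * J by rewrite leq_pmulr.
  nia.
set q := K * x %/ m.
have q1 : 3 * J <= q by rewrite /q leq_divRL.
have q2 : q < 3 * J + 2 by rewrite /q ltn_divLR //; lia.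
have qr : q = 3 * J + 1 -> K * x %% m = 0.
  move=> e; have := divn_eq (K * x) m; rewrite -/q e.
  have : (3 * J + 1) * m <= K * x by rewrite -leq_divRL // -/q e.
  lia.
have Kn : K * n = (6 * J + 2) * m + n by rewrite /K /m; nia.
have Knq : K * n %/ m = 6 * J + 2.
  by rewrite Kn divnMDl // divn_small ?addn0 // /m; lia.
have Knr : K * n %% m = n.
  by rewrite Kn -modnDml modnMl add0n modn_small // /m; lia.
exists (fun a => a + K * a %/ m); split.
  move=> a; rewrite mulnDr divnDMl // -/m.
  set A := K * a %/ m.
  rewrite /K /m nt; lia.
move=> a L /or3P[/eqP->|/eqP->|/eqP->].
- rewrite mulnDr muln1 divnD // (divn_small Km) (modn_small Km).
  set A := K * a %/ m; set c := (m <= _); lia.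
- rewrite mulnDr divnD // -/q.
  set A := K * a %/ m.
  have hc : (m <= K * a %% m + K * x %% m) <= (q != 3 * J + 1).
    case: eqP => [/qr ->|_]; last exact: leq_b1.
    by rewrite addn0 (leqNgt m) ltn_pmod.
  move: hc; set c := (m <= _) => hc.
  move: (q1) (q2); lia.
- rewrite mulnDr divnD // Knq Knr.
  set A := K * a %/ m; set c := (m <= _); lia.
Qed.

Theorem theorem26 (n x : nat) :
  1 < x -> x < n ->
  n %% 3 = 2 -> x %% 3 = 1 -> 2 * x < n ->
  word_representable (circ_adj (2 * n) (jumps_1xn x n)).
Proof.
move=> h1 h2 h3 h4 h5.
have [f [fper fstep]] := circ_color h1 h2 h3 h4 h5.
apply: (@wr_of_3col _ _ (fun i : 'I_(2 * n) => f i %% 3)).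
- by move=> a b; rewrite /circ_adj addnC.
- move=> i j; rewrite /circ_adj /jumps_1xn.
  wlog: i j / i <= j.
    move=> W; case: (leqP i j) => h; first exact: W.
    move=> hadj; rewrite eq_sym; apply: W; first exact: ltnW.
    by rewrite addnC.
  move=> lij.
  have -> : (i - j) = 0 by apply/eqP; rewrite subn_eq0.
  rewrite add0n.
  have jlt := ltn_ord j.
  case: (leqP (j - i) (2 * n - (j - i))) => hd.
  + move=> hL.
    have -> : (j : nat) = i + (j - i) by lia.
    by rewrite eq_sym; apply: fstep.
  + move=> hL.
    have e : i + 2 * n = j + (2 * n - (j - i)) by lia.
    by rewrite -fper e; apply: fstep.
- by move=> a; rewrite ltn_pmod.
Qed.
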